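(* Let $\rho_Z>0$, $p_Z\in\mathbb R$, $K_Z>0$, and set $p_{\infty,Z}=K_Z-p_Z$ and $c_Z=\sqrt{K_Z/\rho_Z}$. Define, for $p>-p_{\infty,Z}$, $$f^{\mathrm{exp}}_Z(p)=c_Z\log\Big(\frac{p+p_{\infty,Z}}{K_Z}\Big),\qquad f^{\mathrm{shock}}_Z(p)=\frac{p-p_Z}{\sqrt{\rho_Z(p+p_{\infty,Z})}}.$$ Then $f^{\mathrm{shock}}_Z(p)\ge f^{\mathrm{exp}}_Z(p)$ for all $p>p_Z$. *)

(* Defs.v *)
From Stdlib Require Import Reals Lra.
Open Scope R_scope.

Definition p_inf (pZ KZ : R) : R := KZ - pZ.
Definition cZ (rhoZ KZ : R) : R := sqrt (KZ / rhoZ).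

Definition f_exp (rhoZ pZ KZ p : R) : R :=
  cZ rhoZ KZ * ln ((p + p_inf pZ KZ) / KZ).

Definition f_shock (rhoZ pZ KZ p : R) : R :=
  (p - pZ) / sqrt (rhoZ * (p + p_inf pZ KZ)).

(* Main.v *)
Require Import Defs.
From Stdlib Require Import Reals Lra.
Open Scope R_scope.

Lemma key (t : R) : 1 <= t -> 2 * ln t <= t - / t.
Proof.
  intros Ht. destruct (Req_dec t 1) as [->|Hne].
  { rewrite ln_1, Rinv_1; lra. }
  assert (H1 : 1 < t) by lra.
  set (g := fun x => x - 1 / x - 2 * ln x).
  assert (D : forall c, 1 <= c <= t -> derivable_pt_lim g c (1 + / (c*c) - 2 * / c)).
  { intros c Hc. unfold g.
    assert (c <> 0) by lra.
    replace (1 + / (c*c) - 2 * / c) with (1 - ((0 * id c - 1 * fct_cte 1 c) / (id c)²) - 2 * / c)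
      by (unfold id, fct_cte, Rsqr; field; auto).
    apply (derivable_pt_lim_minus (fun x => x - 1 / x) (fun x => 2 * ln x)).
    apply (derivable_pt_lim_minus id (fct_cte 1 / id)%F). apply derivable_pt_lim_id.
    apply derivable_pt_lim_div. apply derivable_pt_lim_const. apply derivable_pt_lim_id.
    unfold id; auto.
    apply derivable_pt_lim_scal. apply derivable_pt_lim_ln. lra. }
  destruct (MVT_cor2 g (fun c => 1 + / (c*c) - 2 * / c) 1 t H1 D) as [c [Hc Hc']].
  unfold g in Hc. rewrite ln_1 in Hc. unfold Rdiv in Hc. rewrite !Rmult_1_l, Rinv_1 in Hc.
  assert (0 <= 1 + / (c*c) - 2 * / c).
  { replace (1 + / (c*c) - 2 * / c) with ((1 - / c) * (1 - / c)) by (field; lra).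
    apply Rle_0_sqr. }
  assert (0 <= (1 + / (c*c) - 2 * / c) * (t - 1)) by (apply Rmult_le_pos; lra).
  lra.
Qed.

Theorem lemmaB1 (rhoZ pZ KZ : R) (hrho : 0 < rhoZ) (hK : 0 < KZ) (p : R) (hp : pZ < p) :
  f_shock rhoZ pZ KZ p >= f_exp rhoZ pZ KZ p.
Proof.
  unfold f_shock, f_exp, cZ, p_inf.
  set (q := p + (KZ - pZ)).
  assert (Hq : KZ < q) by (unfold q; lra).
  assert (Hq0 : 0 < q) by lra.
  set (a := sqrt rhoZ). set (b := sqrt KZ). set (c := sqrt q).
  assert (Ha : 0 < a) by (apply sqrt_lt_R0; lra).
  assert (Hb : 0 < b) by (apply sqrt_lt_R0; lra).
  assert (Hc : 0 < c) by (apply sqrt_lt_R0; lra).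
  assert (Ea : a * a = rhoZ) by (apply sqrt_sqrt; lra).
  assert (Eb : b * b = KZ) by (apply sqrt_sqrt; lra).
  assert (Ec : c * c = q) by (apply sqrt_sqrt; lra).
  assert (E1 : sqrt (rhoZ * q) = a * c) by (unfold a, c; apply sqrt_mult; lra).
  assert (E2 : sqrt (KZ / rhoZ) = b / a).
  { unfold a, b; apply sqrt_div_alt; lra. }
  assert (E3 : ln (q / KZ) = 2 * ln (c / b)).
  { replace (q / KZ) with ((c / b) * (c / b)) by (rewrite <- Ec, <- Eb; field; lra).
    rewrite ln_mult; try (apply Rdiv_lt_0_compat; lra). ring. }
  rewrite E1, E2, E3.
  assert (Ht : 1 <= c / b).
  { assert (b <= c).
    { unfold b, c. apply sqrt_le_1_alt. lra. }
    apply (Rmult_le_reg_r b); [lra|]. field_simplify; lra. }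
  pose proof (key _ Ht) as K.
  replace ((p - pZ) / (a * c)) with (b / a * (c / b - / (c / b))).
  2:{ replace (p - pZ) with (q - KZ) by (unfold q; ring). rewrite <- Ec, <- Eb. field; lra. }
  apply Rle_ge. apply Rmult_le_compat_l; [|lra].
  apply Rlt_le, Rdiv_lt_0_compat; lra.
Qed.
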